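(* Let $n>1$ and $m$ be integers with $0<m<n$. (i) Suppose $m\geq\frac n2$. Then the map $\mathcal{F}^{\leq\frac12}(n,m)\to\mathcal{F}^{\leq\frac12}(n,m)$, $\tfrac hk\mapsto\tfrac{k-2h}{2k-3h}$, is well defined, order-reversing and bijective; the map $\mathcal{F}^{\leq\frac12}(n,m)\to\mathcal{F}^{\geq\frac12}(n,m)$, $\tfrac hk\mapsto\tfrac{k-h}{2k-3h}$, is well defined, order-preserving and injective; and the map $\mathcal{F}^{\leq\frac12}(n,m)\to\mathcal{F}^{\geq\frac12}(n,m)$, $\tfrac hk\mapsto\tfrac{k-h}{k}$, is well defined, order-reversing and injective. (ii) Suppose $m\leq\frac n2$. Then the map $\mathcal{F}^{\geq\frac12}(n,m)\to\mathcal{F}^{\geq\frac12}(n,m)$, $\tfrac hk\mapsto\tfrac{h}{3h-k}$, is well defined, order-reversing and bijective; the map $\mathcal{F}^{\geq\frac12}(n,m)\to\mathcal{F}^{\leq\frac12}(n,m)$, $\tfrac hk\mapsto\tfrac{2h-k}{3h-k}$, is well defined, order-preserving and injective; and the map $\mathcal{F}^{\geq\frac12}(n,m)\to\mathcal{F}^{\leq\frac12}(n,m)$, $\tfrac hk\mapsto\tfrac{k-h}{k}$, is well defined, order-reversing and injective.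
   Context: For an integer $n\geq 1$, the Farey sequence $\mathcal{F}_n$ is the ascending sequence of irreducible fractions $\tfrac hk$ (with $h\ge0$, $k\ge1$, $\gcd(h,k)=1$) such that $\tfrac01\leq\tfrac hk\leq\tfrac11$ and $1\leq k\leq n$. For $0<m<n$, let $\mathcal{F}(n,m):=\left(\tfrac hk\in\mathcal{F}_n:\ h\leq m,\ k-h\leq n-m\right)$ (the Farey subsequence associated with an element of rank $m$ in the Boolean lattice of rank $n$). Its left halfsequence is $\mathcal{F}^{\leq\frac12}(n,m):=\left(\tfrac hk\in\mathcal{F}(n,m):\ \tfrac hk\leq\tfrac12\right)$ and its right halfsequence is $\mathcal{F}^{\geq\frac12}(n,m):=\left(\tfrac hk\in\mathcal{F}(n,m):\ \tfrac hk\geq\tfrac12\right)$. All sequences are ordered as rational numbers and fractions are written in lowest terms. *)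

(* Defs.v *)
(* Fractions h/k in lowest terms are represented by rationals
   x : rat, with h = numq x and k = denq x (rat is always normalized). *)
From mathcomp Require Import all_boot all_order all_algebra.
Set Implicit Arguments. Unset Strict Implicit. Unset Printing Implicit Defensive.
Import Order.TTheory GRing.Theory Num.Theory.
Local Open Scope ring_scope.

Definition farey_sub (n m : nat) (x : rat) : bool :=
  [&& 0 <= x, x <= 1, denq x <= n%:Z, numq x <= m%:Z
    & denq x - numq x <= n%:Z - m%:Z].

Definition farey_left (n m : nat) (x : rat) : bool :=
  farey_sub n m x && (x <= 2^-1).
Definition farey_right (n m : nat) (x : rat) : bool :=
  farey_sub n m x && (2^-1 <= x).

Definition mapL1 (x : rat) : rat :=
  (denq x - 2 * numq x)%:~R / (2 * denq x - 3 * numq x)%:~R.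
Definition mapL2 (x : rat) : rat :=
  (denq x - numq x)%:~R / (2 * denq x - 3 * numq x)%:~R.
Definition mapR1 (x : rat) : rat :=
  (numq x)%:~R / (3 * numq x - denq x)%:~R.
Definition mapR2 (x : rat) : rat :=
  (2 * numq x - denq x)%:~R / (3 * numq x - denq x)%:~R.
Definition mapC (x : rat) : rat :=
  (denq x - numq x)%:~R / (denq x)%:~R.

(* Main.v *)
Require Import Defs.
From mathcomp Require Import all_boot all_order all_algebra zify ring.
Import Order.TTheory GRing.Theory Num.Theory.
Local Open Scope ring_scope.

Lemma le_nd (x y : rat) : (x <= y) = (numq x * denq y <= numq y * denq x).
Proof. exact: le_ratE. Qed.
Lemma lt_nd (x y : rat) : (x < y) = (numq x * denq y < numq y * denq x).
Proof. exact: lt_ratE. Qed.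

Lemma numden (a b : int) : 0 < b -> coprime `|a| `|b| ->
  numq (a%:~R / b%:~R : rat) = a /\ denq (a%:~R / b%:~R : rat) = b.
Proof.
move=> b0 c; rewrite coprimeq_num // coprimeq_den // gtr0_sg // mul1r gt_eqF //.
by rewrite gtr0_norm.
Qed.

Lemma cop_lin (h k a b p q r s : int) : coprime `|h| `|k| ->
  h = p * a + q * b -> k = r * a + s * b -> coprime `|a| `|b|.
Proof.
move=> c eh ek.
have ga : ((gcdz a b) %| a)%Z by exact: dvdz_gcdl.
have gb : ((gcdz a b) %| b)%Z by exact: dvdz_gcdr.
have hg : `|gcdz a b|%N = gcdn `|a| `|b| by [].
move: (gcdz a b) ga gb hg => g ga gb hg.
move/dvdzP: ga => [qa ea]; move/dvdzP: gb => [qb eb].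
have gh : (g %| h)%Z.
  apply/dvdzP; exists (p * qa + q * qb); rewrite eh ea eb; ring.
have gk : (g %| k)%Z.
  apply/dvdzP; exists (r * qa + s * qb); rewrite ek ea eb; ring.
have : (g %| gcdz h k)%Z by rewrite dvdz_gcd gh gk.
rewrite /gcdz (eqP c) dvdz1 hg; exact.
Qed.

Lemma half_nd : numq (2^-1 : rat) = 1 /\ denq (2^-1 : rat) = 2.
Proof. by have := @numden 1 2 erefl erefl; rewrite div1r. Qed.
Lemma one_nd : numq (1 : rat) = 1 /\ denq (1 : rat) = 1.
Proof. by []. Qed.

Section S.
Variables (n m : nat).

Lemma leftE x : farey_left n m x = [&& 0 <= numq x, numq x <= denq x, denq x <= n%:Z,
  numq x <= m%:Z, denq x - numq x <= n%:Z - m%:Z & 2 * numq x <= denq x].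
Proof.
rewrite /farey_left /farey_sub numq_ge0 !le_nd.
case: one_nd => -> ->; case: half_nd => -> ->.
rewrite !mulr1 !mul1r (mulrC (numq x)) -!andbA.
by do 4 (congr andb).
Qed.

Lemma rightE x : farey_right n m x = [&& 0 <= numq x, numq x <= denq x, denq x <= n%:Z,
  numq x <= m%:Z, denq x - numq x <= n%:Z - m%:Z & denq x <= 2 * numq x].
Proof.
rewrite /farey_right /farey_sub numq_ge0 !le_nd.
case: one_nd => -> ->; case: half_nd => -> ->.
rewrite !mulr1 !mul1r (mulrC (numq x)) -!andbA.
by do 4 (congr andb).
Qed.
End S.

Lemma L1_nd x : 0 <= numq x -> 2 * numq x <= denq x ->
  numq (mapL1 x) = denq x - 2 * numq x /\ denq (mapL1 x) = 2 * denq x - 3 * numq x.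
Proof.
move=> h0 h1; have k0 := denq_gt0 x; apply: numden; first lia.
apply: (@cop_lin _ _ _ _ (-2) 1 (-3) 2 (coprime_num_den x)); ring.
Qed.

Lemma L2_nd x : 0 <= numq x -> 2 * numq x <= denq x ->
  numq (mapL2 x) = denq x - numq x /\ denq (mapL2 x) = 2 * denq x - 3 * numq x.
Proof.
move=> h0 h1; have k0 := denq_gt0 x; apply: numden; first lia.
apply: (@cop_lin _ _ _ _ 2 (-1) 3 (-1) (coprime_num_den x)); ring.
Qed.

Lemma R1_nd x : denq x <= 2 * numq x ->
  numq (mapR1 x) = numq x /\ denq (mapR1 x) = 3 * numq x - denq x.
Proof.
move=> h1; have k0 := denq_gt0 x; apply: numden; first lia.
apply: (@cop_lin _ _ _ _ 1 0 3 (-1) (coprime_num_den x)); ring.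
Qed.

Lemma R2_nd x : denq x <= 2 * numq x ->
  numq (mapR2 x) = 2 * numq x - denq x /\ denq (mapR2 x) = 3 * numq x - denq x.
Proof.
move=> h1; have k0 := denq_gt0 x; apply: numden; first lia.
apply: (@cop_lin _ _ _ _ (-1) 1 (-3) 2 (coprime_num_den x)); ring.
Qed.

Lemma C_nd x :
  numq (mapC x) = denq x - numq x /\ denq (mapC x) = denq x.
Proof.
have k0 := denq_gt0 x; apply: numden; first lia.
apply: (@cop_lin _ _ _ _ (-1) 1 0 1 (coprime_num_den x)); ring.
Qed.

Lemma dec_inj (P : pred rat) (f : rat -> rat) :
  {in P &, forall x y, x < y -> f y < f x} -> {in P &, injective f}.
Proof.
move=> o x y hx hy e; case: (ltgtP x y) => // h.
  by have := o x y hx hy h; rewrite e ltxx.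
by have := o y x hy hx h; rewrite e ltxx.
Qed.

Lemma inc_inj (P : pred rat) (f : rat -> rat) :
  {in P &, forall x y, x < y -> f x < f y} -> {in P &, injective f}.
Proof.
move=> o x y hx hy e; case: (ltgtP x y) => // h.
  by have := o x y hx hy h; rewrite e ltxx.
by have := o y x hy hx h; rewrite e ltxx.
Qed.

Theorem proposition3 (n m : nat) (hn : (1 < n)%N) (hm0 : (0 < m)%N) (hmn : (m < n)%N) :
  ((n <= 2 * m)%N ->
     ((forall x, farey_left n m x -> farey_left n m (mapL1 x)) /\
      {in farey_left n m &, forall x y, x < y -> mapL1 y < mapL1 x} /\
      {in farey_left n m &, injective mapL1} /\
      (forall y, farey_left n m y -> exists2 x, farey_left n m x & mapL1 x = y)) /\
     ((forall x, farey_left n m x -> farey_right n m (mapL2 x)) /\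
      {in farey_left n m &, forall x y, x < y -> mapL2 x < mapL2 y} /\
      {in farey_left n m &, injective mapL2}) /\
     ((forall x, farey_left n m x -> farey_right n m (mapC x)) /\
      {in farey_left n m &, forall x y, x < y -> mapC y < mapC x} /\
      {in farey_left n m &, injective mapC})) /\
  ((2 * m <= n)%N ->
     ((forall x, farey_right n m x -> farey_right n m (mapR1 x)) /\
      {in farey_right n m &, forall x y, x < y -> mapR1 y < mapR1 x} /\
      {in farey_right n m &, injective mapR1} /\
      (forall y, farey_right n m y -> exists2 x, farey_right n m x & mapR1 x = y)) /\
     ((forall x, farey_right n m x -> farey_left n m (mapR2 x)) /\
      {in farey_right n m &, forall x y, x < y -> mapR2 x < mapR2 y} /\
      {in farey_right n m &, injective mapR2}) /\
     ((forall x, farey_right n m x -> farey_left n m (mapC x)) /\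
      {in farey_right n m &, forall x y, x < y -> mapC y < mapC x} /\
      {in farey_right n m &, injective mapC})).
Proof.
split=> hnm.
- have w1 : forall x, farey_left n m x -> farey_left n m (mapL1 x).
    move=> x; rewrite !leftE => /and5P[a1 a2 a3 a4 /andP[a5 a6]].
    have k0 := denq_gt0 x; have [-> ->] := L1_nd x a1 a6.
    apply/and5P; split; try lia; apply/andP; split; lia.
  have o1 : {in farey_left n m &, forall x y, x < y -> mapL1 y < mapL1 x}.
    move=> x y; rewrite !unfold_in -!/(farey_left _ _ _) !leftE => /and5P[a1 a2 a3 a4 /andP[a5 a6]]
      /and5P[b1 b2 b3 b4 /andP[b5 b6]].
    have kx := denq_gt0 x; have ky := denq_gt0 y.
    rewrite !lt_nd; have [-> ->] := L1_nd x a1 a6; have [-> ->] := L1_nd y b1 b6.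
    lia.
  split; first (split; [exact: w1 | split; [exact: o1 | split; [exact: dec_inj o1|]]]).
    move=> y hy; exists (mapL1 y); first exact: w1.
    move: hy; rewrite leftE => /and5P[a1 a2 a3 a4 /andP[a5 a6]].
    rewrite {1}/mapL1; have [-> ->] := L1_nd y a1 a6.
    rewrite -[RHS]divq_num_den; congr (_%:~R / _%:~R); lia.
  have w2 : forall x, farey_left n m x -> farey_right n m (mapL2 x).
    move=> x; rewrite leftE rightE => /and5P[a1 a2 a3 a4 /andP[a5 a6]].
    have k0 := denq_gt0 x; have [-> ->] := L2_nd x a1 a6.
    apply/and5P; split; try lia; apply/andP; split; lia.
  have o2 : {in farey_left n m &, forall x y, x < y -> mapL2 x < mapL2 y}.
    move=> x y; rewrite !unfold_in -!/(farey_left _ _ _) !leftE => /and5P[a1 a2 a3 a4 /andP[a5 a6]]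
      /and5P[b1 b2 b3 b4 /andP[b5 b6]].
    have kx := denq_gt0 x; have ky := denq_gt0 y.
    rewrite !lt_nd; have [-> ->] := L2_nd x a1 a6; have [-> ->] := L2_nd y b1 b6.
    lia.
  have w3 : forall x, farey_left n m x -> farey_right n m (mapC x).
    move=> x; rewrite leftE rightE => /and5P[a1 a2 a3 a4 /andP[a5 a6]].
    have k0 := denq_gt0 x; have [-> ->] := C_nd x.
    apply/and5P; split; try lia; apply/andP; split; lia.
  have o3 : {in farey_left n m &, forall x y, x < y -> mapC y < mapC x}.
    move=> x y; rewrite !unfold_in -!/(farey_left _ _ _) !leftE => /and5P[a1 a2 a3 a4 /andP[a5 a6]]
      /and5P[b1 b2 b3 b4 /andP[b5 b6]].
    have kx := denq_gt0 x; have ky := denq_gt0 y.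
    rewrite !lt_nd; have [-> ->] := C_nd x; have [-> ->] := C_nd y.
    lia.
  split; split; [exact: w2| split; [exact: o2 | exact: inc_inj o2]|
                 exact: w3| split; [exact: o3 | exact: dec_inj o3]].
- have w1 : forall x, farey_right n m x -> farey_right n m (mapR1 x).
    move=> x; rewrite !rightE => /and5P[a1 a2 a3 a4 /andP[a5 a6]].
    have k0 := denq_gt0 x; have [-> ->] := R1_nd x a6.
    apply/and5P; split; try lia; apply/andP; split; lia.
  have o1 : {in farey_right n m &, forall x y, x < y -> mapR1 y < mapR1 x}.
    move=> x y; rewrite !unfold_in -!/(farey_right _ _ _) !rightE => /and5P[a1 a2 a3 a4 /andP[a5 a6]]
      /and5P[b1 b2 b3 b4 /andP[b5 b6]].
    have kx := denq_gt0 x; have ky := denq_gt0 y.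
    rewrite !lt_nd; have [-> ->] := R1_nd x a6; have [-> ->] := R1_nd y b6.
    lia.
  split; first (split; [exact: w1 | split; [exact: o1 | split; [exact: dec_inj o1|]]]).
    move=> y hy; exists (mapR1 y); first exact: w1.
    move: hy; rewrite rightE => /and5P[a1 a2 a3 a4 /andP[a5 a6]].
    rewrite {1}/mapR1; have [-> ->] := R1_nd y a6.
    rewrite -[RHS]divq_num_den; congr (_%:~R / _%:~R); lia.
  have w2 : forall x, farey_right n m x -> farey_left n m (mapR2 x).
    move=> x; rewrite leftE rightE => /and5P[a1 a2 a3 a4 /andP[a5 a6]].
    have k0 := denq_gt0 x; have [-> ->] := R2_nd x a6.
    apply/and5P; split; try lia; apply/andP; split; lia.
  have o2 : {in farey_right n m &, forall x y, x < y -> mapR2 x < mapR2 y}.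
    move=> x y; rewrite !unfold_in -!/(farey_right _ _ _) !rightE => /and5P[a1 a2 a3 a4 /andP[a5 a6]]
      /and5P[b1 b2 b3 b4 /andP[b5 b6]].
    have kx := denq_gt0 x; have ky := denq_gt0 y.
    rewrite !lt_nd; have [-> ->] := R2_nd x a6; have [-> ->] := R2_nd y b6.
    lia.
  have w3 : forall x, farey_right n m x -> farey_left n m (mapC x).
    move=> x; rewrite leftE rightE => /and5P[a1 a2 a3 a4 /andP[a5 a6]].
    have k0 := denq_gt0 x; have [-> ->] := C_nd x.
    apply/and5P; split; try lia; apply/andP; split; lia.
  have o3 : {in farey_right n m &, forall x y, x < y -> mapC y < mapC x}.
    move=> x y; rewrite !unfold_in -!/(farey_right _ _ _) !rightE => /and5P[a1 a2 a3 a4 /andP[a5 a6]]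
      /and5P[b1 b2 b3 b4 /andP[b5 b6]].
    have kx := denq_gt0 x; have ky := denq_gt0 y.
    rewrite !lt_nd; have [-> ->] := C_nd x; have [-> ->] := C_nd y.
    lia.
  split; split; [exact: w2| split; [exact: o2 | exact: inc_inj o2]|
                 exact: w3| split; [exact: o3 | exact: dec_inj o3]].
Qed.
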